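(* Let $k\ge2$, $M\ge1$, $N\ge1$, and let $g\colon[N]^M\to\{0,1\}^k$ be a function such that no single input coordinate affects all $k$ output bits of $g$. Let $\mathbf{Z}=g(\mathbf{U}_{[N]}^M)$. Then at least one of the following holds: (1) $\Pr[\mathbf{Z}\notin\{0^k,1^k\}]\ge \frac{1}{100k}$; or (2) there is $z\in\{0^k,1^k\}$ with $\Pr[\mathbf{Z}=z]\ge 2/3$.
   Context: $\mathbf{U}_{[N]}^M$ is the uniform distribution on $[N]^M$. An input coordinate affects an output bit if that bit depends on the coordinate (i.e., changing only that coordinate can change the bit). *)

(* Defs.v *)
From HB Require Import structures.
From mathcomp Require Import all_boot all_order all_algebra.
Set Implicit Arguments. Unset Strict Implicit. Unset Printing Implicit Defensive.
Import Order.TTheory GRing.Theory Num.Theory.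

Definition inputs (M N : nat) := {ffun 'I_M -> 'I_N}.
Definition outputs (k : nat) := {ffun 'I_k -> bool}.

Definition affects (M N k : nat) (g : inputs M N -> outputs k) (i : 'I_M) (j : 'I_k) : Prop :=
  exists x y : inputs M N,
    (forall i' : 'I_M, i' != i -> x i' = y i') /\ g x j != g y j.

Definition unif_prob (T : finType) (A : pred T) : rat :=
  (#|[set x : T | A x]|%:R / #|T|%:R)%R.

Definition zeros (k : nat) : outputs k := [ffun => false].
Definition ones (k : nat) : outputs k := [ffun => true].

(* Main.v *)
Require Import Defs.
From mathcomp Require Import all_boot all_order all_algebra.
Import Order.TTheory GRing.Theory Num.Theory.
From mathcomp Require Import zify.
From Stdlib Require Import IndefiniteDescription.
Lemma noaff_set (M N k : nat) (g : inputs M N -> outputs k) (j : 'I_k) (S : pred 'I_M)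
  (hS : forall i, S i -> ~ affects g i j) :
  forall x y : inputs M N, (forall i, ~~ S i -> x i = y i) -> g x j = g y j.
Proof.
move=> x y; have [n Hn] : exists n, #|[pred i | x i != y i]| = n by eexists.
elim: n x Hn => [|n IH] x Hn hxy.
  have -> : x = y; last by [].
  apply/ffunP => i; apply/eqP; move/card0_eq: Hn => /(_ i) /=.
  by rewrite !inE => /negbFE.
have : (0 < #|[pred i | x i != y i]|)%N by rewrite Hn.
case/card_gt0P => i0; rewrite inE => hi0.
have Si0 : S i0 by apply/negPn/negP => /hxy /eqP; rewrite (negbTE hi0).
pose x' : inputs M N := [ffun i => if i == i0 then y i0 else x i].
have -> : g x j = g x' j.
  apply/eqP/negPn/negP => hne; apply: (hS i0 Si0); exists x, x'; split => //.
  by move=> i' hi'; rewrite ffunE (negbTE hi').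
apply: IH.
  move: Hn; rewrite (cardD1 i0) inE hi0 add1n => -[<-].
  apply: eq_card => i; rewrite !inE ffunE; case: (i =P i0) => [->|_] //=.
  by rewrite eqxx.
move=> i hi; rewrite ffunE; case: eqP => [E|_]; last exact: hxy.
by rewrite E in hi; rewrite (negbTE hi) in Si0.
Qed.
Lemma core (k M N : nat) (hk : (2 <= k)%N) (g : inputs M N -> outputs k)
  (hg : forall i : 'I_M, exists j : 'I_k, ~ affects g i j) :
  let B := [set x | (g x != zeros k) && (g x != ones k)] in
  let A0 := [set x | g x == zeros k] in
  let A1 := [set x | g x == ones k] in
  (#|A1| * #|A0| <= 2 * k * (#|B| * #|inputs M N|))%N /\
  (#|inputs M N| <= #|A0| + #|A1| + #|B|)%N.
Proof.
move=> B A0 A1.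
set T := inputs M N.
have k0 : (0 < k)%N by apply: leq_trans hk.
pose i0 : 'I_k := Ordinal k0.
pose F (x : T) := g x i0.
pose jf := fun i => proj1_sig (constructive_indefinite_description _ (hg i)).
have hjf : forall i, ~ affects g i (jf i) := fun i => proj2_sig (constructive_indefinite_description _ (hg i)).
pose h (t : nat) (x y : T) : T := [ffun i => if (jf i < t)%N then y i else x i].
split; last first.
  rewrite -cardsT; apply: (@leq_trans #|A0 :|: (A1 :|: B)|).
    apply: subset_leq_card; apply/subsetP => x _; rewrite !inE.
    by case: (g x == zeros k) => //=; case: (g x == ones k).
  apply: leq_trans (leq_card_setU _ _) _.
  rewrite -addnA leq_add2l.
  exact: leq_card_setU.
have cardE : forall t, #|[set p : T * T | h t p.1 p.2 \in B]| = (#|B| * #|T|)%N.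
  move=> t; pose s (p : T * T) := (h t p.1 p.2, h t p.2 p.1).
  have sK : involutive s.
    move=> [x y]; rewrite /s /=; congr pair; apply/ffunP => i; rewrite !ffunE;
    by case: (jf i < t)%N.
  have -> : [set p : T * T | h t p.1 p.2 \in B] = s @^-1: setX B setT.
    by apply/setP => p; rewrite !inE andbT.
  by rewrite card_preimset ?cardsX ?cardsT //; apply: inv_inj.
have const : forall z, z \notin B -> forall j, g z j = g z i0.
  move=> z; rewrite inE negb_and !negbK => /orP[] /eqP -> j; by rewrite !ffunE.
have step : forall t x y, F (h t x y) != F (h t.+1 x y) -> (h t x y \in B) || (h t.+1 x y \in B).
  move=> t x y; apply: contraR; rewrite negb_or => /andP[n1 n2].
  case: (ltnP t k) => tk.
    pose jt : 'I_k := Ordinal tk.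
    rewrite /F -(const _ n1 jt) -(const _ n2 jt); apply/eqP.
    apply: (@noaff_set _ _ _ g jt (fun i => jf i == jt)).
      by move=> i /eqP <-.
    move=> i hi; rewrite !ffunE.
    have : jf i != t :> nat by apply: contra hi => /eqP E; apply/eqP/val_inj.
    rewrite neq_ltn => /orP[] c.
      by rewrite c ltnS ltnW.
    by rewrite ltnNge (ltnW c) /= ltnNge c.
  have -> : h t x y = h t.+1 x y; last by [].
  apply/ffunP => i; rewrite !ffunE.
  by rewrite (leq_trans (ltn_ord (jf i)) tk) (leq_trans (ltn_ord (jf i)) (leq_trans tk (leqnSn _))).
have chain : forall t, (#|[set p : T * T | F (h 0 p.1 p.2) != F (h t p.1 p.2)]| <= 2 * t * (#|B| * #|T|))%N.
  elim=> [|t IH].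
    by rewrite mul0n leqn0 cards_eq0; apply/eqP/setP => p; rewrite !inE eqxx.
  apply: (@leq_trans (#|[set p : T * T | F (h 0 p.1 p.2) != F (h t p.1 p.2)]| +
     (#|[set p : T * T | h t p.1 p.2 \in B]| + #|[set p : T * T | h t.+1 p.1 p.2 \in B]|))).
    apply: (@leq_trans #|[set p : T * T | F (h 0 p.1 p.2) != F (h t p.1 p.2)] :|:
       ([set p : T * T | h t p.1 p.2 \in B] :|: [set p : T * T | h t.+1 p.1 p.2 \in B])|).
      apply: subset_leq_card; apply/subsetP => p; rewrite !inE => hp.
      case E: (F (h 0 p.1 p.2) != F (h t p.1 p.2)) => //=.
      have := step t p.1 p.2; rewrite !inE; apply; move/negbFE/eqP: E => <-; exact: hp.
    apply: leq_trans (leq_card_setU _ _) _; rewrite leq_add2l.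
    exact: leq_card_setU.
  rewrite !cardE; lia.
apply: leq_trans (chain k); rewrite -cardsX; apply: subset_leq_card.
apply/subsetP => -[x y]; rewrite !inE /= => /andP[/eqP hx /eqP hy].
have -> : h 0 x y = x by apply/ffunP => i; rewrite ffunE.
have -> : h k x y = y by apply/ffunP => i; rewrite ffunE ltn_ord.
by rewrite /F hx hy !ffunE.
Qed.
Local Open Scope ring_scope.
Lemma ratlt (a n p q : nat) : (0 < n)%N -> (0 < q)%N ->
  ((a%:R / n%:R : rat) < p%:R / q%:R) = (a * q < p * n)%N.
Proof.
move=> n0 q0; rewrite ltr_pdivrMr ?ltr0n // mulrAC ltr_pdivlMr ?ltr0n //.
by rewrite -!natrM ltr_nat.
Qed.

Theorem claim5 (k M N : nat) (hk : (2 <= k)%N) (hM : (1 <= M)%N) (hN : (1 <= N)%N)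
  (g : inputs M N -> outputs k)
  (hg : forall i : 'I_M, exists j : 'I_k, ~ affects g i j) :
  (1 / (100 * k%:R) <= unif_prob (fun x : inputs M N => (g x != zeros k) && (g x != ones k)))
  \/ (exists z : outputs k, ((z == zeros k) || (z == ones k)) /\
        2 / 3 <= unif_prob (fun x : inputs M N => g x == z)).
Proof.
move: (@core k M N hk g hg) => /= [H1 H2].
have n0 : (0 < #|inputs M N|)%N.
  by apply/card_gt0P; exists [ffun => Ordinal hN].
rewrite /unif_prob.
have k0 : (0 < k)%N by apply: leq_trans hk.
case: leP => hb; [by left | right].
have e1 : (1 / (100 * k%:R) : rat) = 1%:R / (100 * k)%:R by rewrite natrM.
have k100 : (0 < 100 * k)%N by rewrite muln_gt0.
rewrite e1 (ratlt _ _ 1 _ n0 k100) in hb.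
have [h1|h1] := leP (2 / 3 : rat) (#|[set x | g x == ones k]|%:R / #|inputs M N|%:R).
  exists (ones k); split; [by rewrite eqxx orbT | exact: h1].
have [h0|h0] := leP (2 / 3 : rat) (#|[set x | g x == zeros k]|%:R / #|inputs M N|%:R).
  exists (zeros k); split; [by rewrite eqxx | exact: h0].
exfalso.
have e2 : (2 / 3 : rat) = 2%:R / 3%:R by [].
rewrite (ratlt _ _ 2 3 n0 isT) in h1; rewrite (ratlt _ _ 2 3 n0 isT) in h0.
move: H1 H2 hb h1 h0.
set b := #|[set x | g x != zeros k & g x != ones k]|.
set a1 := #|[set x | g x == ones k]|.
set a0 := #|[set x | g x == zeros k]|.
set n := #|inputs M N|.
move=> H1 H2 hb h1 h0.
have hb2 : (100 * b <= n)%N.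
  have := leq_mul (leqnn (b * 100)) k0; rewrite muln1 -mulnA => hh.
  lia.
pose c := (n - 3 * b)%N.
have s1 : (c <= 3 * a0)%N by rewrite /c; lia.
have s1' : (c <= 3 * a1)%N by rewrite /c; lia.
have s2 := leq_mul s1 s1'.
have s4 : (97 * n <= 100 * c)%N by rewrite /c; lia.
have s5 := leq_mul s4 s4.
have s3 : (b * (100 * k) * (2 * n) < (1 * n) * (2 * n))%N by rewrite ltn_pmul2r ?muln_gt0.
have s6 : (a1 * a0 * (100 * 2) <= 2 * k * (b * n) * (100 * 2))%N by rewrite leq_pmul2r.
clear -s2 s3 s5 s6 n0.
move: s2 s3 s5 s6; rewrite !mulnA.

lia.
Qed.
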